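(* Let $\varphi:\Lambda\to\Gamma$ be a regular covering map of finite simplicial graphs. If $u_1,u_2$ are vertices of $\Lambda$ with $u_1\lesssim u_2$, then $\varphi(u_1)\lesssim\varphi(u_2)$. Moreover, for every vertex $u$ of $\Lambda$, $\varphi(V\Lambda_{\gtrsim u})=V\Gamma_{\gtrsim_\varphi\varphi(u)}$.
   Context: Graphs are finite simplicial graphs; subgraphs are induced. $\mathrm{lk}(v)$ is the subgraph induced by the neighbours of $v$ and $\mathrm{st}(v)$ the subgraph induced by $\mathrm{lk}(v)\cup\{v\}$. The link-star order on vertices: $x\lesssim y$ iff $\mathrm{lk}(x)\subseteq\mathrm{st}(y)$; $V\Lambda_{\gtrsim u}=\{u'\in V\Lambda: u\lesssim u'\}$. A covering map $\varphi:\Lambda\to\Gamma$ is a surjective simplicial map mapping the neighbours of each vertex $u$ bijectively onto the neighbours of $\varphi(u)$; regular means the group of graph automorphisms $\mu$ of $\Lambda$ with $\varphi\mu=\varphi$ acts transitively on each fiber. For vertices $x,y$ of $\Gamma$, $x\lesssim_\varphi y$ means: for every $w\in\varphi^{-1}(x)$ there is $w'\in\varphi^{-1}(y)$ with $\mathrm{lk}(w)\subseteq\mathrm{st}(w')$; $V\Gamma_{\gtrsim_\varphi x}=\{y\in V\Gamma: x\lesssim_\varphi y\}$. *)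

(* Defs.v *)
From mathcomp Require Import all_boot.
From mathcomp Require Import perm.
Set Implicit Arguments. Unset Strict Implicit. Unset Printing Implicit Defensive.

Definition simple_graph (T : finType) (e : rel T) : Prop :=
  symmetric e /\ irreflexive e.

(* link and star (vertex sets of the induced subgraphs) *)
Definition lk (T : finType) (e : rel T) (v : T) : {set T} := [set w | e v w].
Definition st (T : finType) (e : rel T) (v : T) : {set T} := v |: lk e v.

Definition lsle (T : finType) (e : rel T) (x y : T) : bool :=
  lk e x \subset st e y.

Definition upset (T : finType) (e : rel T) (u : T) : {set T} :=
  [set u' | lsle e u u'].

Definition covering (L G : finType) (eL : rel L) (eG : rel G) (phi : L -> G) : Prop :=
  [/\ forall x y, eL x y -> eG (phi x) (phi y),
      forall y : G, exists x : L, phi x = y,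
      forall u, {in lk eL u &, injective phi} &
      forall u, phi @: lk eL u = lk eG (phi u)].

Definition graph_aut (L : finType) (eL : rel L) (mu : {perm L}) : Prop :=
  forall x y, eL (mu x) (mu y) = eL x y.

Definition regular_covering (L G : finType) (eL : rel L) (eG : rel G) (phi : L -> G) : Prop :=
  covering eL eG phi /\
  forall w w' : L, phi w = phi w' ->
    exists mu : {perm L}, [/\ graph_aut eL mu, (forall x, phi (mu x) = phi x) & mu w = w'].

Definition lsle_phi (L G : finType) (eL : rel L) (phi : L -> G) (x y : G) : bool :=
  [forall w : L, (phi w == x) ==> [exists w' : L, (phi w' == y) && lsle eL w w']].

Definition upset_phi (L G : finType) (eL : rel L) (phi : L -> G) (x : G) : {set G} :=
  [set y | lsle_phi eL phi x y].

(* Main.v *)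
Require Import Defs.
From mathcomp Require Import all_boot.
From mathcomp Require Import perm.

Theorem lemma3p1 (L G : finType) (eL : rel L) (eG : rel G) (phi : L -> G)
  (hL : simple_graph eL) (hG : simple_graph eG)
  (hphi : regular_covering eL eG phi) :
  (forall u1 u2 : L, lsle eL u1 u2 -> lsle eG (phi u1) (phi u2)) /\
  (forall u : L, phi @: upset eL u = upset_phi eL phi (phi u)).
Proof.
case: hphi => [[hsimp hsurj hinj himg] hreg].
split.
  move=> u1 u2 /subsetP H; apply/subsetP => y.
  rewrite -himg => /imsetP [x Hx ->].
  have := H x Hx; rewrite /st !inE => /orP [/eqP -> | Hx2].
    by rewrite eqxx.
  by rewrite (hsimp _ _ Hx2) orbT.
move=> u; apply/setP => y; apply/idP/idP.
  case/imsetP => u' Hu' ->.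
  rewrite /upset_phi inE; apply/forallP => w; apply/implyP => /eqP Hw.
  have [mu [Hmu Hphi Hmuw]] := hreg u w (esym Hw).
  apply/existsP; exists (mu u'); rewrite Hphi eqxx /=.
  move: Hu'; rewrite /upset inE => /subsetP H.
  apply/subsetP => x; rewrite /lk inE => Hx.
  have Hx' : (perm_inv mu x) \in lk eL u.
    by rewrite /lk inE -Hmu permKV Hmuw.
  have := H _ Hx'; rewrite /st /lk !inE => /orP [/eqP E | E].
    by rewrite -E permKV eqxx.
  by rewrite -(Hmu u') permKV in E; rewrite E orbT.
rewrite /upset_phi inE => /forallP /(_ u); rewrite eqxx /=.
case/existsP => w' /andP [/eqP <- Hw'].
by apply/imsetP; exists w'; rewrite // /upset inE.
Qed.
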